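(* Let $T=7$ (so $\mathit{CP}=\{0\}$) and $D\ge 1$. Let $G$ be the path $v_0 - v_1 - \dots - v_D$, and suppose the adversary activates only $v_0$, in round $0$ (all other nodes are activated by beeps of neighbors). Then under Algorithm FS, the smallest round $t$ such that $\delta_t(v_0)=\delta_t(v_1)=\dots=\delta_t(v_D)$ (with all nodes active) is exactly $t=7D$. Hence the bound $4D+\lfloor D/\lfloor T/4\rfloor\rfloor\cdot(T\bmod 4)$ of Theorem 1 is attained.
   Context: Model (beeping model with arbitrary activations). Synchronous rounds; in each round each active node either beeps or listens; a listening node learns only whether at least one neighbor beeped. Checkpoints: $\mathit{CP}=\{c\in\mathbb{N}_0: c\equiv 0\pmod 4,\ T-c>3\}$. Algorithm FS. Each node $v$ stores $\delta(v)\in\{0,\dots,T-1\}$, $\mathit{State}(v)\in\{\mathit{Inactive},\mathit{Beep},\mathit{Listen}\}$, $\mathit{Induced}(v)\in\{\mathit{true},\mathit{false}\}$. Initially all nodes are Inactive. A node $v$ is activated in round $t$ if the adversary activates it in round $t$, or $v$ is inactive and some neighbor beeps in round $t-1$; then at the beginning of round $t$, $\delta(v)=1$, $\mathit{State}(v)=\mathit{Beep}$, $\mathit{Induced}(v)=\mathit{true}$. In each round each active node $v$, according to its state at the beginning of the round: (1) if $\mathit{State}(v)=\mathit{Beep}$: beeps; $\delta(v)\gets\delta(v)+1\bmod T$; $\mathit{State}(v)\gets\mathit{Listen}$; (2) if $\mathit{State}(v)=\mathit{Listen}$ and some neighbor beeps: if $\delta(v)\equiv c-1\pmod T$ for some $c\in\mathit{CP}$,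 then $\delta(v)\gets\delta(v)+2\bmod T$, $\mathit{State}(v)\gets\mathit{Beep}$, $\mathit{Induced}(v)\gets\mathit{true}$; else $\delta(v)\gets\delta(v)+1\bmod T$; (3) if $\mathit{State}(v)=\mathit{Listen}$ and no neighbor beeps: $\delta(v)\gets\delta(v)+1\bmod T$; then if ($\mathit{Induced}(v)=\mathit{true}$ and new $\delta(v)\in\mathit{CP}$) or new $\delta(v)=0$: $\mathit{State}(v)\gets\mathit{Beep}$, $\mathit{Induced}(v)\gets\mathit{false}$. $\delta_t(v)$ denotes the value at the beginning of round $t$. *)

(* Defs.v *)
From mathcomp Require Import all_boot.
Set Implicit Arguments. Unset Strict Implicit. Unset Printing Implicit Defensive.

Inductive phase := PBeep | PListen.

Record nstate := NS { delta : nat; ph : phase; induced : bool }.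

(* A configuration at the beginning of a round: None = Inactive. *)
Definition config (V : finType) := V -> option nstate.

Definition isCP (T c : nat) : bool := (c %% 4 == 0) && (c + 3 < T).

(* delta = c - 1 (mod T) for some c in CP (every c in CP is < T). *)
Definition before_CP (T d : nat) : bool :=
  has (fun c => isCP T c && (d.+1 %% T == c)) (iota 0 T).

Definition activated_state := NS 1 PBeep true.

Definition beeps (s : option nstate) : bool :=
  if s is Some (NS _ PBeep _) then true else false.

Definition node_update (T : nat) (heard : bool) (s : nstate) : nstate :=
  match ph s with
  | PBeep => NS ((delta s).+1 %% T) PListen (induced s)
  | PListen =>
    if heard then
      if before_CP T (delta s) then NS ((delta s).+2 %% T) PBeep true
      else NS ((delta s).+1 %% T) PListen (induced s)
    else
      let d' := (delta s).+1 %% T in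
      if (induced s && isCP T d') || (d' == 0) then NS d' PBeep false
      else NS d' PListen (induced s)
  end.

Section Run.
Variables (V : finType) (T : nat) (adj : rel V) (adv : nat -> pred V).
(* adv t v : the adversary activates v in round t. *)

Definition step (t : nat) (c : config V) : config V := fun v =>
  let heard := [exists u, adj v u && beeps (c u)] in
  if adv t.+1 v then Some activated_state else
  match c v with
  | None => if heard then Some activated_state else None
  | Some s => Some (node_update T heard s)
  end.

Definition init : config V := fun v =>
  if adv 0 v then Some activated_state else None.

(* Configuration at the beginning of round t. *)
Fixpoint run (t : nat) : config V :=
  match t with
  | 0 => init
  | t'.+1 => step t' (run t')
  end.

Definition synced (t : nat) : Prop :=
  exists d, forall v, option_map delta (run t v) = Some d.
End Run.

Definition path_adj (D : nat) : rel 'I_D.+1 :=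
  fun i j => (i.+1 == j :> nat) || (j.+1 == i :> nat).

Definition adv_v0 (D : nat) : nat -> pred 'I_D.+1 :=
  fun t v => (t == 0) && (v == ord0).
Arguments path_adj D : clear implicits.
Arguments adv_v0 D : clear implicits.

(* Main.v *)
Require Import Defs.
From mathcomp Require Import all_boot.
From mathcomp Require Import zify.

Definition E (t v : nat) := if t <= 7*v then (t-v)%%6 + 1 else (t.+1)%%7.
Definition Bp (t v : nat) : bool := if t <= 7*v then (t-v)%%6 == 0 else (t.+1)%%7 == 0.
Definition beepN t v := (v <= t) && Bp t v.

Definition Inv D t := forall v : 'I_D.+1,
  match run 7 (path_adj D) (adv_v0 D) t v with
  | None => t < v
  | Some s => v <= t /\ delta s = E t v /\ beeps (Some s) = Bp t v
  end.

Lemma beeps_run D t (v : 'I_D.+1) : Inv D t ->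
  beeps (run 7 (path_adj D) (adv_v0 D) t v) = beepN t v.
Proof.
move=> /(_ v); rewrite /beepN; case: (run _ _ _ t v) => [s|] /=.
  by move=> [-> [_ ->]].
by move=> H; rewrite leqNgt H.
Qed.

Lemma heard_eq D t (v : 'I_D.+1) : Inv D t ->
  [exists u, path_adj D v u && beeps (run 7 (path_adj D) (adv_v0 D) t u)] =
  [exists u : 'I_D.+1, path_adj D v u && beepN t u].
Proof.
move=> I; apply/existsP/existsP => [[u Hu]|[u Hu]]; exists u;
  by rewrite ?(@beeps_run D t u I) // -(@beeps_run D t u I).
Qed.

Lemma cp7 b x : (b && isCP 7 x) || (x == 0) = (x == 0).
Proof.
case: x => [|[|[|[|n]]]]; rewrite /isCP ?andbF //=; case: b => //=.
by rewrite orbF; apply/negbTE; rewrite negb_and; apply/orP; right; rewrite -leqNgt; lia.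
Qed.

Lemma inv0 D : Inv D 0.
Proof.
move=> v; rewrite /= /init /adv_v0 /=.
case: (eqVneq v ord0) => [->|Hv] /=.
  by rewrite /E /Bp.
by case: v Hv => [[|v] Hv] //=.
Qed.

Lemma invS D t : Inv D t -> Inv D t.+1.
Proof.
move=> I v.
have HE := @heard_eq D t v I.
rewrite /= /step /adv_v0 /= HE.
have Iv := I v.
case: (run _ _ _ t v) Iv => [[d p b]|] /=.
- move=> [Hvt [Hd Hb]] /=. subst d.
  split; first lia.
  move: Hb; rewrite /node_update /=.
  case: p => /= Hb.
  +
    move: Hb; rewrite /Bp /E; case: ifP => Ht; case: ifP => Ht' /= Hb; split => //; lia.
  + move: Hb; rewrite /Bp /E; case: ifP => Ht Hb.
    * have Hr : (t - v) %% 6 != 0 by rewrite -Hb.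
      case: (eqVneq ((t - v) %% 6) 5) => H5.
      --
        have -> : [exists u : 'I_D.+1, path_adj D v u && beepN t u].
          apply/existsP.
          have Hv1 : v.-1 < D.+1 by have := ltn_ord v; lia.
          exists (Ordinal Hv1); rewrite /path_adj /beepN /Bp /=.
          apply/andP; split; first by apply/orP; right; apply/eqP; lia.
          apply/andP; split; first lia.
          case: ifP => ?; apply/eqP; lia.
        have -> : before_CP 7 (((t - v) %% 6) + 1) by rewrite H5.
        rewrite /=. have -> : t.+1 <= 7 * v by lia.
        split; [lia|]. by rewrite /= eq_sym; apply/esym/eqP; lia.
      -- have Hbc : before_CP 7 (((t - v) %% 6) + 1) = false.
           rewrite /before_CP /isCP /=.
           have : (t - v) %% 6 < 6 by rewrite ltn_mod.
           move: Hr H5; case: ((t - v) %% 6) => [|[|[|[|[|[|n]]]]]] //; lia.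
         have Ht1 : t.+1 <= 7 * v by lia.
         rewrite Ht1 Hbc /isCP.
         have Hm : ((t - v) %% 6 + 1).+1 %% 7 = (t.+1 - v) %% 6 + 1 by lia.
         have H0 : ((t.+1 - v) %% 6 + 1 == 0) = false by apply/eqP; lia.
         case: ifP => ?; rewrite Hm ?cp7 ?H0 /=; split => //; apply/esym/eqP; lia.
    *
      have Hne : (t.+1) %% 7 != 6 -> (t.+1 %% 7).+1 %% 7 <> 0 by lia.
      have Ht1 : (t.+1 <= 7 * v) = false by lia.
      rewrite Ht1.
      case: (eqVneq ((t.+1) %% 7) 6) => H6.
      -- have -> : [exists u : 'I_D.+1, path_adj D v u && beepN t u] = false.
           apply/negbTE/existsP => [[u /andP [Ha Hbu]]].
           move: Ha Hbu; rewrite /path_adj /beepN /Bp => /orP [] /eqP Hu /andP [Hut];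
             case: ifP => ? /eqP; lia.
         rewrite cp7.
         have -> : (t.+1 %% 7).+1 %% 7 = 0 by lia.
         rewrite /=; split => //; [lia | by apply/esym/eqP; lia].
      -- have Hbc : before_CP 7 (t.+1 %% 7) = false.
           rewrite /before_CP /isCP /=.
           have : t.+1 %% 7 < 7 by rewrite ltn_mod.
           move: H6 Hb; case: (t.+1 %% 7) => [|[|[|[|[|[|[|n]]]]]]] //; lia.
         rewrite Hbc.
         have H0 : ((t.+1 %% 7).+1 %% 7 == 0) = false by apply/eqP; lia.
         case: ifP => ?; rewrite ?cp7 ?H0 /=; split => //; try lia;
           apply/esym/eqP; lia.
- move=> Htv.
  case: (eqVneq t v.-1) => Ht.
  + have -> : [exists u : 'I_D.+1, path_adj D v u && beepN t u].
      apply/existsP.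
      have Hv1 : v.-1 < D.+1 by have := ltn_ord v; lia.
      exists (Ordinal Hv1); rewrite /path_adj /beepN /Bp /=.
      apply/andP; split; first by apply/orP; right; apply/eqP; lia.
      apply/andP; split; first lia.
      case: ifP => ?; apply/eqP; lia.
    rewrite /E /Bp /=.
    have -> : t.+1 <= 7 * v by lia.
    split; [lia|split; [lia|]]. by apply/esym/eqP; lia.
  + have -> : [exists u : 'I_D.+1, path_adj D v u && beepN t u] = false.
      apply/negbTE/existsP => [[u /andP [Ha Hbu]]].
      move: Ha Hbu; rewrite /path_adj /beepN => /orP [] /eqP Hu /andP [Hut]; lia.
    lia.
Qed.

Lemma invAll D t : Inv D t.
Proof. elim: t => [|t IH]; [exact: inv0 | exact: invS]. Qed.

Theorem mainTheorem3 (D : nat) (hD : 1 <= D) :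
  synced 7 (path_adj D) (adv_v0 D) (7 * D) /\
  (forall t, t < 7 * D -> ~ synced 7 (path_adj D) (adv_v0 D) t) /\
  7 * D = 4 * D + (D %/ (7 %/ 4)) * (7 %% 4).
Proof.
split; [|split].
- exists 1 => v; have := invAll D (7 * D) v.
  case: (run _ _ _ _ v) => [s|] /=.
  + move=> [_ [-> _]]; rewrite /E.
    have Hv : v <= D by rewrite -ltnS.
    case: ifP => ?; congr Some; lia.
  + have Hv : v < D.+1 by []. lia.
- move=> t Ht [d Hd].
  have Hv1 : D.-1 < D.+1 by lia.
  have HD := Hd ord_max; have HD1 := Hd (Ordinal Hv1).
  have I2 := invAll D t ord_max; have I1 := invAll D t (Ordinal Hv1).
  move: HD HD1 I2 I1.
  case: (run _ _ _ _ ord_max) => [s2|] //=.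
  case: (run _ _ _ _ (Ordinal Hv1)) => [s1|] //=.
  move=> [H2] [H1] [HtD [Hs2 _]] [_ [Hs1 _]]; move: HtD => /= HtD.
  move: Hs1 Hs2; rewrite H1 H2 /E /= => ->.
  case: ifP => ?; case: ifP => ?; lia.
- rewrite (_ : 7 %/ 4 = 1) // (_ : 7 %% 4 = 3) // divn1; lia.
Qed.
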